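(* Let $K$ be a superfield and $f(X),g(X)\in K[X]$ with $g(X)\ne0$. Then there exist $q(X),r(X)\in K[X]$ such that $f(X)\in q(X)g(X)+r(X)$ and either $r(X)=0$ or $\deg r(X)<\deg g(X)$.
   Context: Multivalued operations are extended to subsets by unions. A superring is a structure $(S,+,\cdot,-,0,1)$ with multivalued addition and multiplication such that $(S,+,-,0)$ is a commutative multigroup, $(S,\cdot,1)$ is a commutative multimonoid, $a\cdot0=\{0\}$, $c(a+b)\subseteq ca+cb$, and $-(ab)=(-a)b=a(-b)$ (multigroup axioms: $c\in ab\Rightarrow a\in c\,r(b)$ and $b\in r(a)c$; $b\in a\cdot1\iff a=b$; $(ab)c\subseteq a(bc)$; $ab=ba$; multimonoid: the last two and $a\in 1\cdot a$). A superdomain is a nontrivial superring in which $0\in ab$ iff $a=0$ or $b=0$. A superfield is a superdomain in which for every $a\ne0$ there exists $b$ with $1\in ab$. The superring of polynomials $R[X]$ is the set of finitely supported sequences $(a_n)_{n\in\omega}$ with $(c_n)\in(a_n)+(b_n)$ iff $c_n\in a_n+b_n$ for all $n$, and $(c_n)\in(a_n)\cdot(b_n)$ iff $c_n\in a_0b_n+a_1b_{n-1}+\dots+a_nb_0$ for all $n$; $-(a_n)=(-a_n)$, $0=(0,0,\dots)$, $1=(1,0,\dots)$. The degree of a nonzero polynomial is the largest $n$ with $a_n\ne0$. *)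

(* Defs.v *)
From Stdlib Require Import Arith.

Set Implicit Arguments.

(** Multivalued operations are encoded as ternary relations:
    [add a b c] means  c ∈ a + b,  [mul a b c] means  c ∈ a · b. *)
Record superring := Superring {
  carrier :> Type;
  add : carrier -> carrier -> carrier -> Prop;
  mul : carrier -> carrier -> carrier -> Prop;
  neg : carrier -> carrier;
  zero : carrier;
  one : carrier;
  add_rev : forall a b c, add a b c -> add c (neg b) a /\ add (neg a) c b;
  add_zero : forall a b, add a zero b <-> a = b;
  add_assoc : forall a b c x y, add a b x -> add x c y ->
      exists z, add b c z /\ add a z y;
  add_comm : forall a b c, add a b c <-> add b a c;
  mul_assoc : forall a b c x y, mul a b x -> mul x c y ->
      exists z, mul b c z /\ mul a z y;
  mul_comm : forall a b c, mul a b c <-> mul b a c;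
  one_mul : forall a, mul one a a;
  mul_zero : forall a c, mul a zero c <-> c = zero;
  mul_distr : forall a b c x y, add a b x -> mul c x y ->
      exists u v, mul c a u /\ mul c b v /\ add u v y;
  neg_mull : forall a b y, (exists x, mul a b x /\ y = neg x) <-> mul (neg a) b y;
  neg_mulr : forall a b y, (exists x, mul a b x /\ y = neg x) <-> mul a (neg b) y
}.

Arguments add {s}. Arguments mul {s}. Arguments neg {s}.
Arguments zero {s}. Arguments one {s}.

Definition superdomain (R : superring) : Prop :=
  (zero : R) <> one /\
  forall a b : R, mul a b zero <-> a = zero \/ b = zero.

Definition superfield (R : superring) : Prop :=
  superdomain R /\ forall a : R, a <> zero -> exists b, mul a b one.

Definition is_poly (R : superring) (p : nat -> R) : Prop :=
  exists N, forall n, N <= n -> p n = zero.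

Definition set_add (R : superring) (A B : R -> Prop) : R -> Prop :=
  fun z => exists x y, A x /\ B y /\ add x y z.

(** The set  a_0 b_n + a_1 b_(n-1) + ... + a_k b_(n-k)  (left associated). *)
Fixpoint conv_partial (R : superring) (a b : nat -> R) (n k : nat) : R -> Prop :=
  match k with
  | O => mul (a 0) (b n)
  | S k' => @set_add R (conv_partial R a b n k') (mul (a k) (b (n - k)))
  end.

Arguments conv_partial {R}.

Definition padd (R : superring) (a b c : nat -> R) : Prop :=
  forall n, add (a n) (b n) (c n).

Definition pmul (R : superring) (a b c : nat -> R) : Prop :=
  forall n, conv_partial a b n n (c n).

Definition pzero (R : superring) : nat -> R := fun _ => zero.

Definition is_degree (R : superring) (p : nat -> R) (n : nat) : Prop :=
  p n <> zero /\ forall m, n < m -> p m = zero.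

Arguments is_poly {R}. Arguments set_add {R}. Arguments padd {R}.
Arguments pmul {R}. Arguments pzero {R}. Arguments is_degree {R}.

(* Main.v *)
Require Import Defs.
From Stdlib Require Import Arith Lia Classical ClassicalEpsilon.

Arguments add_rev {s} a b c _.
Arguments add_zero {s} a b.
Arguments add_assoc {s} a b c x y _ _.
Arguments add_comm {s} a b c.
Arguments mul_assoc {s} a b c x y _ _.
Arguments mul_comm {s} a b c.
Arguments one_mul {s} a.
Arguments mul_zero {s} a c.
Arguments mul_distr {s} a b c x y _ _.

Lemma choice_nat (T : Type) (P : nat -> T -> Prop) :
  (forall n, exists y, P n y) -> exists f, forall n, P n (f n).
Proof.
  intros H.
  exists (fun n => proj1_sig (constructive_indefinite_description _ (H n))).
  intros n. exact (proj2_sig (constructive_indefinite_description _ (H n))).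
Qed.

Lemma add0l (R : superring) (a b : R) : add zero a b <-> a = b.
Proof. rewrite add_comm. apply add_zero. Qed.

Lemma mul0l (R : superring) (a c : R) : mul zero a c <-> c = zero.
Proof. rewrite mul_comm. apply mul_zero. Qed.

Lemma add_neg (R : superring) (a : R) : add (neg a) a zero.
Proof. destruct (add_rev _ _ _ (proj2 (add_zero a a) eq_refl)) as [_ H]. exact H. Qed.

Lemma negneg (R : superring) (a : R) : neg (neg a) = a.
Proof.
  destruct (add_rev _ _ _ (add_neg R a)) as [_ H]. apply add_zero in H. exact H.
Qed.

Lemma add_ne (R : superring) (a b : R) : exists z, add a b z.
Proof.
  destruct (add_assoc _ _ _ _ _ (add_neg R a) (proj2 (add0l R b b) eq_refl)) as [z [H _]].
  eauto.
Qed.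

Lemma mul_ne (R : superring) (c a : R) : exists u, mul c a u.
Proof.
  pose proof (proj1 (add_comm _ _ _) (add_neg R a)) as H1.
  destruct (mul_distr _ _ c _ _ H1 (proj2 (mul_zero c zero) eq_refl)) as [u [v [H _]]].
  eauto.
Qed.

Lemma RA (R : superring) (a b c y z : R) :
  add b c y -> add a y z -> exists w, add a b w /\ add w c z.
Proof.
  intros H1 H2. apply add_comm in H1. apply add_comm in H2.
  destruct (add_assoc _ _ _ _ _ H1 H2) as [w [H3 H4]].
  exists w. split; apply add_comm; assumption.
Qed.

Lemma set_add_0l (R : superring) (A B : R -> Prop) z :
  (forall x, A x <-> x = zero) -> (set_add A B z <-> B z).
Proof.
  intros H. split.
  - intros [x [y [Ha [Hb Hxy]]]]. apply H in Ha. subst x. apply add0l in Hxy. subst; auto.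
  - intros Hb. exists zero, z. split; [apply H; reflexivity|]. split; auto. apply add0l; reflexivity.
Qed.

Lemma set_add_0r (R : superring) (A B : R -> Prop) z :
  (forall y, B y <-> y = zero) -> (set_add A B z <-> A z).
Proof.
  intros H. split.
  - intros [x [y [Ha [Hb Hxy]]]]. apply H in Hb. subst y. apply add_zero in Hxy. subst; auto.
  - intros Ha. exists z, zero. split; auto. split; [apply H; reflexivity|]. apply add_zero; reflexivity.
Qed.

Lemma conv_Z (R : superring) (a b : nat -> R) n K' z :
  (forall j, j <= K' -> a j = zero) -> (conv_partial a b n K' z <-> z = zero).
Proof.
  revert z; induction K' as [|K' IH]; intros z H; cbn [conv_partial].
  - rewrite (H 0 (le_n 0)). apply mul0l.
  - rewrite set_add_0l. rewrite (H (S K') (le_n _)). apply mul0l.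
    intros x. apply IH. intros j Hj. apply H. lia.
Qed.

Lemma conv_mono (R : superring) (g : nat -> R) (k n : nat) (t z : R) :
  forall K', k <= K' -> k <= n ->
  (conv_partial (fun j => if Nat.eqb j k then t else zero) g n K' z <-> mul t (g (n - k)) z).
Proof.
  intro K'; revert z. induction K' as [|K' IH]; intros z Hk Hn.
  - assert (k = 0) by lia. subst k. cbn [conv_partial]. rewrite Nat.sub_0_r. simpl. tauto.
  - cbn [conv_partial]. destruct (Nat.eqb_spec (S K') k) as [E|E].
    + subst k. rewrite set_add_0l. tauto.
      intros x. apply conv_Z. intros j Hj. destruct (Nat.eqb_spec j (S K')); [lia|reflexivity].
    + rewrite set_add_0r. apply IH; lia. intros y. apply mul0l.
Qed.

Lemma conv_disj (R : superring) (a b c g : nat -> R) n :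
  (forall j, a j = zero \/ b j = zero) -> (forall j, b j = zero -> c j = a j) ->
  (forall j, a j = zero -> c j = b j) ->
  forall K' x y z, conv_partial a g n K' x -> conv_partial b g n K' y -> add x y z ->
  conv_partial c g n K' z.
Proof.
  intros Hd Hb Ha K'. induction K' as [|K' IH]; intros x y z Hx Hy Hz; cbn [conv_partial] in *.
  - destruct (Hd 0) as [E|E].
    + rewrite E in Hx. apply mul0l in Hx. subst x. apply add0l in Hz. subst z.
      rewrite (Ha 0 E). exact Hy.
    + rewrite E in Hy. apply mul0l in Hy. subst y. apply add_zero in Hz. subst z.
      rewrite (Hb 0 E). exact Hx.
  - destruct (Hd (S K')) as [E|E].
    + destruct Hx as [x0 [e [Hx0 [He Hxe]]]]. rewrite E in He. apply mul0l in He. subst e.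
      apply add_zero in Hxe. subst x0.
      destruct Hy as [y0 [e [Hy0 [He Hye]]]].
      destruct (RA _ _ _ _ _ _ Hye Hz) as [w [Hw1 Hw2]].
      exists w, e. split. apply (IH x y0 w Hx0 Hy0 Hw1). split.
      rewrite (Ha _ E). exact He. exact Hw2.
    + destruct Hy as [y0 [e [Hy0 [He Hye]]]]. rewrite E in He. apply mul0l in He. subst e.
      apply add_zero in Hye. subst y0.
      destruct Hx as [x0 [e [Hx0 [He Hxe]]]]. apply add_comm in Hxe.
      destruct (add_assoc _ _ _ _ _ Hxe Hz) as [w [Hw1 Hw2]].
      exists w, e. split. exact (IH x0 _ w Hx0 Hy0 Hw1). split.
      rewrite (Hb _ E). exact He. apply add_comm; exact Hw2.
Qed.

Lemma deg_exists (R : superring) (r : nat -> R) N :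
  (forall n, N <= n -> r n = zero) -> (forall n, r n = zero) \/ exists d, d < N /\ is_degree r d.
Proof.
  induction N as [|N IH]; intros H.
  - left. intros n; apply H; lia.
  - destruct (classic (r N = zero)) as [E|E].
    + destruct IH as [H1|[d [Hd1 Hd2]]].
      * intros n Hn. destruct (Nat.eq_dec n N). subst; auto. apply H; lia.
      * left; auto.
      * right; exists d; split; [lia|auto].
    + right. exists N. split. lia. split. auto. intros m Hm. apply H. lia.
Qed.

Lemma main (R : superring) (HK : superfield R) (g : nat -> R) dg :
  is_degree g dg -> forall m (f : nat -> R), (forall n, m <= n -> f n = zero) ->
  exists q r p : nat -> R, (forall n, m <= n + dg -> q n = zero) /\
    (forall n, dg <= n -> r n = zero) /\ pmul q g p /\ padd p r f.
Proof.
  intros [Hg0 Hgd].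
  assert (Base : forall m (f : nat -> R), m <= dg -> (forall n, m <= n -> f n = zero) ->
    exists q r p : nat -> R, (forall n, m <= n + dg -> q n = zero) /\
    (forall n, dg <= n -> r n = zero) /\ pmul q g p /\ padd p r f).
  { intros m0 f0 Hm Hf0. exists pzero, f0, pzero. split. intros; reflexivity.
    split. intros n Hn; apply Hf0; lia. split.
    - intros n. unfold pzero. apply (proj2 (conv_Z _ _ _ _ _ _ (fun j _ => eq_refl))). reflexivity.
    - intros n. apply add0l; reflexivity. }
  intros m. induction m as [|m IH]; intros f Hf.
  { apply Base; auto; lia. }
  destruct (le_lt_dec (S m) dg) as [Hle|Hlt]. { apply Base; auto. }
  destruct (Nat.le_exists_sub dg m) as [k [Ek _]]; [lia|].
  destruct HK as [[H01 Hdom] Hinv]. destruct (Hinv _ Hg0) as [c Hc].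
  destruct (mul_assoc _ _ _ _ _ Hc (one_mul (f m))) as [t [_ Ht]].
  apply mul_comm in Ht.
  pose (h := fun j => if Nat.eqb j k then t else zero).
  assert (Hp0 : forall n, exists y : R, conv_partial h g n n y /\
            (n = m -> y = f m) /\ (m < n -> y = zero)).
  { intros n. destruct (lt_dec n k).
    - exists zero. split. apply conv_Z. intros j Hj. unfold h.
      destruct (Nat.eqb_spec j k); [lia|auto]. reflexivity. split; intros; lia.
    - destruct (Nat.eq_dec n m).
      + subst n. exists (f m). split. unfold h. apply conv_mono; [lia|lia|].
        replace (m - k) with dg by lia. exact Ht. split; [auto | intros; lia].
      + destruct (lt_dec m n).
        * exists zero. split. unfold h. apply conv_mono; try lia.
          rewrite (Hgd (n-k)) by lia. apply mul_zero; reflexivity. split; intros; [lia|auto].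
        * destruct (mul_ne R t (g (n-k))) as [u Hu]. exists u. split.
          unfold h. apply conv_mono; try lia; auto. split; intros; lia. }
  destruct (choice_nat _ _ Hp0) as [p Hp].
  assert (Hf0 : forall n, exists y : R, add (p n) y (f n) /\ (m <= n -> y = zero)).
  { intros n. destruct (lt_dec n m).
    - destruct (add_ne R (f n) (neg (p n))) as [y Hy]. exists y. split.
      apply add_comm. destruct (add_rev _ _ _ Hy) as [H1 _]. rewrite negneg in H1. exact H1.
      intros; lia.
    - exists zero. split; auto. destruct (Nat.eq_dec n m).
      + subst n. rewrite (proj1 (proj2 (Hp m)) eq_refl). apply add_zero; reflexivity.
      + rewrite (proj2 (proj2 (Hp n))) by lia. rewrite (Hf n) by lia. apply add_zero; reflexivity. }
  destruct (choice_nat _ _ Hf0) as [f' Hf'].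
  destruct (IH f') as [q' [r' [p' [Hq' [Hr' [Hpm' Hpa']]]]]].
  { intros n Hn; apply Hf'; auto. }
  assert (Hs0 : forall n, exists y : R, add (p' n) (p n) y /\ add y (r' n) (f n)).
  { intros n.
    destruct (RA _ _ _ _ _ _ (Hpa' n) (proj1 (Hf' n))) as [w [Hw1 Hw2]].
    exists w. split; [apply add_comm; exact Hw1 | exact Hw2]. }
  destruct (choice_nat _ _ Hs0) as [s Hs].
  exists (fun j => if Nat.eqb j k then t else q' j), r', s.
  split; [|split; [exact Hr'|split]].
  - intros n Hn. destruct (Nat.eqb_spec n k). lia. apply Hq'. lia.
  - intros n. apply (conv_disj R q' h _ g n) with (x := p' n) (y := p n).
    + intros j; unfold h; destruct (Nat.eqb_spec j k).
      * left. subst j. apply Hq'. lia.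
      * right; reflexivity.
    + intros j; unfold h; destruct (Nat.eqb_spec j k); intros E.
      * rewrite E. symmetry. apply Hq'. lia.
      * reflexivity.
    + intros j; unfold h; destruct (Nat.eqb_spec j k); intros E.
      * reflexivity.
      * exact E.
    + apply Hpm'.
    + apply (proj1 (Hp n)).
    + apply (proj1 (Hs n)).
  - intros n. apply (proj2 (Hs n)).
Qed.

Theorem theorem3p5 (K : superring) (HK : superfield K) (f g : nat -> K) :
  is_poly f -> is_poly g -> (exists n, g n <> zero) ->
  exists q r : nat -> K, is_poly q /\ is_poly r /\
    (exists p : nat -> K, is_poly p /\ pmul q g p /\ padd p r f) /\
    ((forall n, r n = zero) \/
     exists dr dg, is_degree r dr /\ is_degree g dg /\ dr < dg).
Proof.
  intros [Nf Hf] [Ng Hg] [n0 Hn0].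
  destruct (deg_exists K g Ng Hg) as [Hz|[dg [_ Hdg]]].
  { exfalso; apply Hn0, Hz. }
  destruct (main K HK g dg Hdg Nf f Hf) as [q [r [p [Hq [Hr [Hpm Hpa]]]]]].
  exists q, r. split. { exists Nf; intros n Hn; apply Hq; lia. }
  split. { exists dg; auto. }
  split.
  - exists p. split; [|split; auto]. exists (Nf + dg). intros n Hn.
    specialize (Hpa n). rewrite (Hr n) in Hpa by lia. rewrite (Hf n) in Hpa by lia.
    apply add_zero in Hpa. exact Hpa.
  - destruct (deg_exists K r dg Hr) as [H|[d [Hd1 Hd2]]].
    + left; auto.
    + right. exists d, dg. auto.
Qed.
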